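(* For each integer $\mu\geq 2$ there exists a large set with multiplicity LS$(3,4,10;\mu)$.
   Context: A Steiner system S$(t,k,n)$ is a pair $(Q,B)$ where $Q$ is an $n$-set and $B$ is a collection of $k$-subsets (blocks) of $Q$ such that every $t$-subset of $Q$ is contained in exactly one block. A large set with multiplicity $\mu$, LS$(t,k,n;\mu)$, is a family (the same system may occur more than once) of Steiner systems S$(t,k,n)$ on a common $n$-set $Q$ such that every $k$-subset of $Q$ is a block of exactly $\mu$ of the systems. *)

(* Defs.v *)
From mathcomp Require Import all_boot.
Unset Printing Implicit Defensive.

Definition steiner_system (t k n : nat) (B : {set {set 'I_n}}) : Prop :=
  (forall b, b \in B -> #|b| = k) /\
  (forall T : {set 'I_n}, #|T| = t -> #|[set b in B | T \subset b]| = 1).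

(* A large set with multiplicity mu, LS(t,k,n;mu): a family (repetitions
   allowed, hence a list) of Steiner systems S(t,k,n) on the common n-set
   'I_n such that every k-subset of 'I_n is a block of exactly mu of them
   (counted with multiplicity). *)
Definition large_set_mult (t k n mu : nat) (L : seq {set {set 'I_n}}) : Prop :=
  (forall B, B \in L -> steiner_system t k n B) /\
  (forall K : {set 'I_n}, #|K| = k -> count (fun B : {set {set 'I_n}} => K \in B) L = mu).

(* Main.v *)
Require Import Defs.
From mathcomp Require Import all_boot.
Unset Printing Implicit Defensive.

Definition L2n : seq (seq (seq nat)) :=
[:: [:: [:: 0; 1; 2; 9]; [:: 0; 1; 3; 7]; [:: 0; 1; 4; 6]; [:: 0; 1; 5; 8]; [:: 0; 2; 3; 4]; [:: 0; 2; 5; 6]; [:: 0; 2; 7; 8]; [:: 0; 3; 5; 9]; [:: 0; 3; 6; 8]; [:: 0; 4; 5; 7]; [:: 0; 4; 8; 9]; [:: 0; 6; 7; 9]; [:: 1; 2; 3; 5]; [:: 1; 2; 4; 7]; [:: 1; 2; 6; 8]; [:: 1; 3; 4; 8]; [:: 1; 3; 6; 9]; [:: 1; 4; 5; 9]; [:: 1; 5; 6; 7]; [:: 1; 7; 8; 9]; [:: 2; 3; 6; 7]; [:: 2; 3; 8; 9]; [:: 2; 4; 5; 8]; [:: 2; 4; 6; 9]; [:: 2; 5; 7; 9]; [:: 3; 4; 5; 6]; [:: 3; 4; 7; 9]; [:: 3; 5; 7; 8]; [:: 4; 6; 7; 8]; [:: 5; 6; 8; 9]];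
 [:: [:: 0; 1; 2; 3]; [:: 0; 1; 4; 9]; [:: 0; 1; 5; 8]; [:: 0; 1; 6; 7]; [:: 0; 2; 4; 7]; [:: 0; 2; 5; 9]; [:: 0; 2; 6; 8]; [:: 0; 3; 4; 8]; [:: 0; 3; 5; 7]; [:: 0; 3; 6; 9]; [:: 0; 4; 5; 6]; [:: 0; 7; 8; 9]; [:: 1; 2; 4; 5]; [:: 1; 2; 6; 9]; [:: 1; 2; 7; 8]; [:: 1; 3; 4; 7]; [:: 1; 3; 5; 6]; [:: 1; 3; 8; 9]; [:: 1; 4; 6; 8]; [:: 1; 5; 7; 9]; [:: 2; 3; 4; 6]; [:: 2; 3; 5; 8]; [:: 2; 3; 7; 9]; [:: 2; 4; 8; 9]; [:: 2; 5; 6; 7]; [:: 3; 4; 5; 9]; [:: 3; 6; 7; 8]; [:: 4; 5; 7; 8]; [:: 4; 6; 7; 9]; [:: 5; 6; 8; 9]];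
 [:: [:: 0; 1; 2; 3]; [:: 0; 1; 4; 8]; [:: 0; 1; 5; 7]; [:: 0; 1; 6; 9]; [:: 0; 2; 4; 5]; [:: 0; 2; 6; 8]; [:: 0; 2; 7; 9]; [:: 0; 3; 4; 9]; [:: 0; 3; 5; 6]; [:: 0; 3; 7; 8]; [:: 0; 4; 6; 7]; [:: 0; 5; 8; 9]; [:: 1; 2; 4; 7]; [:: 1; 2; 5; 6]; [:: 1; 2; 8; 9]; [:: 1; 3; 4; 6]; [:: 1; 3; 5; 8]; [:: 1; 3; 7; 9]; [:: 1; 4; 5; 9]; [:: 1; 6; 7; 8]; [:: 2; 3; 4; 8]; [:: 2; 3; 5; 9]; [:: 2; 3; 6; 7]; [:: 2; 4; 6; 9]; [:: 2; 5; 7; 8]; [:: 3; 4; 5; 7]; [:: 3; 6; 8; 9]; [:: 4; 5; 6; 8]; [:: 4; 7; 8; 9]; [:: 5; 6; 7; 9]];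
 [:: [:: 0; 1; 2; 8]; [:: 0; 1; 3; 7]; [:: 0; 1; 4; 5]; [:: 0; 1; 6; 9]; [:: 0; 2; 3; 5]; [:: 0; 2; 4; 9]; [:: 0; 2; 6; 7]; [:: 0; 3; 4; 6]; [:: 0; 3; 8; 9]; [:: 0; 4; 7; 8]; [:: 0; 5; 6; 8]; [:: 0; 5; 7; 9]; [:: 1; 2; 3; 4]; [:: 1; 2; 5; 6]; [:: 1; 2; 7; 9]; [:: 1; 3; 5; 9]; [:: 1; 3; 6; 8]; [:: 1; 4; 6; 7]; [:: 1; 4; 8; 9]; [:: 1; 5; 7; 8]; [:: 2; 3; 6; 9]; [:: 2; 3; 7; 8]; [:: 2; 4; 5; 7]; [:: 2; 4; 6; 8]; [:: 2; 5; 8; 9]; [:: 3; 4; 5; 8]; [:: 3; 4; 7; 9]; [:: 3; 5; 6; 7]; [:: 4; 5; 6; 9]; [:: 6; 7; 8; 9]];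
 [:: [:: 0; 1; 2; 4]; [:: 0; 1; 3; 9]; [:: 0; 1; 5; 6]; [:: 0; 1; 7; 8]; [:: 0; 2; 3; 7]; [:: 0; 2; 5; 8]; [:: 0; 2; 6; 9]; [:: 0; 3; 4; 5]; [:: 0; 3; 6; 8]; [:: 0; 4; 6; 7]; [:: 0; 4; 8; 9]; [:: 0; 5; 7; 9]; [:: 1; 2; 3; 8]; [:: 1; 2; 5; 9]; [:: 1; 2; 6; 7]; [:: 1; 3; 4; 6]; [:: 1; 3; 5; 7]; [:: 1; 4; 5; 8]; [:: 1; 4; 7; 9]; [:: 1; 6; 8; 9]; [:: 2; 3; 4; 9]; [:: 2; 3; 5; 6]; [:: 2; 4; 5; 7]; [:: 2; 4; 6; 8]; [:: 2; 7; 8; 9]; [:: 3; 4; 7; 8]; [:: 3; 5; 8; 9]; [:: 3; 6; 7; 9]; [:: 4; 5; 6; 9]; [:: 5; 6; 7; 8]];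
 [:: [:: 0; 1; 2; 5]; [:: 0; 1; 3; 4]; [:: 0; 1; 6; 7]; [:: 0; 1; 8; 9]; [:: 0; 2; 3; 6]; [:: 0; 2; 4; 8]; [:: 0; 2; 7; 9]; [:: 0; 3; 5; 9]; [:: 0; 3; 7; 8]; [:: 0; 4; 5; 7]; [:: 0; 4; 6; 9]; [:: 0; 5; 6; 8]; [:: 1; 2; 3; 9]; [:: 1; 2; 4; 6]; [:: 1; 2; 7; 8]; [:: 1; 3; 5; 7]; [:: 1; 3; 6; 8]; [:: 1; 4; 5; 8]; [:: 1; 4; 7; 9]; [:: 1; 5; 6; 9]; [:: 2; 3; 4; 7]; [:: 2; 3; 5; 8]; [:: 2; 4; 5; 9]; [:: 2; 5; 6; 7]; [:: 2; 6; 8; 9]; [:: 3; 4; 5; 6]; [:: 3; 4; 8; 9]; [:: 3; 6; 7; 9]; [:: 4; 6; 7; 8]; [:: 5; 7; 8; 9]];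
 [:: [:: 0; 1; 2; 6]; [:: 0; 1; 3; 8]; [:: 0; 1; 4; 7]; [:: 0; 1; 5; 9]; [:: 0; 2; 3; 4]; [:: 0; 2; 5; 7]; [:: 0; 2; 8; 9]; [:: 0; 3; 5; 6]; [:: 0; 3; 7; 9]; [:: 0; 4; 5; 8]; [:: 0; 4; 6; 9]; [:: 0; 6; 7; 8]; [:: 1; 2; 3; 5]; [:: 1; 2; 4; 8]; [:: 1; 2; 7; 9]; [:: 1; 3; 4; 9]; [:: 1; 3; 6; 7]; [:: 1; 4; 5; 6]; [:: 1; 5; 7; 8]; [:: 1; 6; 8; 9]; [:: 2; 3; 6; 9]; [:: 2; 3; 7; 8]; [:: 2; 4; 5; 9]; [:: 2; 4; 6; 7]; [:: 2; 5; 6; 8]; [:: 3; 4; 5; 7]; [:: 3; 4; 6; 8]; [:: 3; 5; 8; 9]; [:: 4; 7; 8; 9]; [:: 5; 6; 7; 9]];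
 [:: [:: 0; 1; 2; 4]; [:: 0; 1; 3; 6]; [:: 0; 1; 5; 7]; [:: 0; 1; 8; 9]; [:: 0; 2; 3; 9]; [:: 0; 2; 5; 6]; [:: 0; 2; 7; 8]; [:: 0; 3; 4; 7]; [:: 0; 3; 5; 8]; [:: 0; 4; 5; 9]; [:: 0; 4; 6; 8]; [:: 0; 6; 7; 9]; [:: 1; 2; 3; 8]; [:: 1; 2; 5; 9]; [:: 1; 2; 6; 7]; [:: 1; 3; 4; 5]; [:: 1; 3; 7; 9]; [:: 1; 4; 6; 9]; [:: 1; 4; 7; 8]; [:: 1; 5; 6; 8]; [:: 2; 3; 4; 6]; [:: 2; 3; 5; 7]; [:: 2; 4; 5; 8]; [:: 2; 4; 7; 9]; [:: 2; 6; 8; 9]; [:: 3; 4; 8; 9]; [:: 3; 5; 6; 9]; [:: 3; 6; 7; 8]; [:: 4; 5; 6; 7]; [:: 5; 7; 8; 9]];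
 [:: [:: 0; 1; 2; 5]; [:: 0; 1; 3; 8]; [:: 0; 1; 4; 6]; [:: 0; 1; 7; 9]; [:: 0; 2; 3; 6]; [:: 0; 2; 4; 7]; [:: 0; 2; 8; 9]; [:: 0; 3; 4; 9]; [:: 0; 3; 5; 7]; [:: 0; 4; 5; 8]; [:: 0; 5; 6; 9]; [:: 0; 6; 7; 8]; [:: 1; 2; 3; 7]; [:: 1; 2; 4; 9]; [:: 1; 2; 6; 8]; [:: 1; 3; 4; 5]; [:: 1; 3; 6; 9]; [:: 1; 4; 7; 8]; [:: 1; 5; 6; 7]; [:: 1; 5; 8; 9]; [:: 2; 3; 4; 8]; [:: 2; 3; 5; 9]; [:: 2; 4; 5; 6]; [:: 2; 5; 7; 8]; [:: 2; 6; 7; 9]; [:: 3; 4; 6; 7]; [:: 3; 5; 6; 8]; [:: 3; 7; 8; 9]; [:: 4; 5; 7; 9]; [:: 4; 6; 8; 9]];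
 [:: [:: 0; 1; 2; 6]; [:: 0; 1; 3; 4]; [:: 0; 1; 5; 9]; [:: 0; 1; 7; 8]; [:: 0; 2; 3; 9]; [:: 0; 2; 4; 8]; [:: 0; 2; 5; 7]; [:: 0; 3; 5; 8]; [:: 0; 3; 6; 7]; [:: 0; 4; 5; 6]; [:: 0; 4; 7; 9]; [:: 0; 6; 8; 9]; [:: 1; 2; 3; 7]; [:: 1; 2; 4; 9]; [:: 1; 2; 5; 8]; [:: 1; 3; 5; 6]; [:: 1; 3; 8; 9]; [:: 1; 4; 5; 7]; [:: 1; 4; 6; 8]; [:: 1; 6; 7; 9]; [:: 2; 3; 4; 5]; [:: 2; 3; 6; 8]; [:: 2; 4; 6; 7]; [:: 2; 5; 6; 9]; [:: 2; 7; 8; 9]; [:: 3; 4; 6; 9]; [:: 3; 4; 7; 8]; [:: 3; 5; 7; 9]; [:: 4; 5; 8; 9]; [:: 5; 6; 7; 8]];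
 [:: [:: 0; 1; 2; 8]; [:: 0; 1; 3; 6]; [:: 0; 1; 4; 5]; [:: 0; 1; 7; 9]; [:: 0; 2; 3; 5]; [:: 0; 2; 4; 9]; [:: 0; 2; 6; 7]; [:: 0; 3; 4; 7]; [:: 0; 3; 8; 9]; [:: 0; 4; 6; 8]; [:: 0; 5; 6; 9]; [:: 0; 5; 7; 8]; [:: 1; 2; 3; 4]; [:: 1; 2; 5; 7]; [:: 1; 2; 6; 9]; [:: 1; 3; 5; 9]; [:: 1; 3; 7; 8]; [:: 1; 4; 6; 7]; [:: 1; 4; 8; 9]; [:: 1; 5; 6; 8]; [:: 2; 3; 6; 8]; [:: 2; 3; 7; 9]; [:: 2; 4; 5; 6]; [:: 2; 4; 7; 8]; [:: 2; 5; 8; 9]; [:: 3; 4; 5; 8]; [:: 3; 4; 6; 9]; [:: 3; 5; 6; 7]; [:: 4; 5; 7; 9]; [:: 6; 7; 8; 9]];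
 [:: [:: 0; 1; 2; 9]; [:: 0; 1; 3; 5]; [:: 0; 1; 4; 7]; [:: 0; 1; 6; 8]; [:: 0; 2; 3; 7]; [:: 0; 2; 4; 6]; [:: 0; 2; 5; 8]; [:: 0; 3; 4; 8]; [:: 0; 3; 6; 9]; [:: 0; 4; 5; 9]; [:: 0; 5; 6; 7]; [:: 0; 7; 8; 9]; [:: 1; 2; 3; 6]; [:: 1; 2; 4; 8]; [:: 1; 2; 5; 7]; [:: 1; 3; 4; 9]; [:: 1; 3; 7; 8]; [:: 1; 4; 5; 6]; [:: 1; 5; 8; 9]; [:: 1; 6; 7; 9]; [:: 2; 3; 4; 5]; [:: 2; 3; 8; 9]; [:: 2; 4; 7; 9]; [:: 2; 5; 6; 9]; [:: 2; 6; 7; 8]; [:: 3; 4; 6; 7]; [:: 3; 5; 6; 8]; [:: 3; 5; 7; 9]; [:: 4; 5; 7; 8]; [:: 4; 6; 8; 9]];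
 [:: [:: 0; 1; 2; 7]; [:: 0; 1; 3; 5]; [:: 0; 1; 4; 9]; [:: 0; 1; 6; 8]; [:: 0; 2; 3; 8]; [:: 0; 2; 4; 5]; [:: 0; 2; 6; 9]; [:: 0; 3; 4; 6]; [:: 0; 3; 7; 9]; [:: 0; 4; 7; 8]; [:: 0; 5; 6; 7]; [:: 0; 5; 8; 9]; [:: 1; 2; 3; 9]; [:: 1; 2; 4; 6]; [:: 1; 2; 5; 8]; [:: 1; 3; 4; 8]; [:: 1; 3; 6; 7]; [:: 1; 4; 5; 7]; [:: 1; 5; 6; 9]; [:: 1; 7; 8; 9]; [:: 2; 3; 4; 7]; [:: 2; 3; 5; 6]; [:: 2; 4; 8; 9]; [:: 2; 5; 7; 9]; [:: 2; 6; 7; 8]; [:: 3; 4; 5; 9]; [:: 3; 5; 7; 8]; [:: 3; 6; 8; 9]; [:: 4; 5; 6; 8]; [:: 4; 6; 7; 9]];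
 [:: [:: 0; 1; 2; 7]; [:: 0; 1; 3; 9]; [:: 0; 1; 4; 8]; [:: 0; 1; 5; 6]; [:: 0; 2; 3; 8]; [:: 0; 2; 4; 6]; [:: 0; 2; 5; 9]; [:: 0; 3; 4; 5]; [:: 0; 3; 6; 7]; [:: 0; 4; 7; 9]; [:: 0; 5; 7; 8]; [:: 0; 6; 8; 9]; [:: 1; 2; 3; 6]; [:: 1; 2; 4; 5]; [:: 1; 2; 8; 9]; [:: 1; 3; 4; 7]; [:: 1; 3; 5; 8]; [:: 1; 4; 6; 9]; [:: 1; 5; 7; 9]; [:: 1; 6; 7; 8]; [:: 2; 3; 4; 9]; [:: 2; 3; 5; 7]; [:: 2; 4; 7; 8]; [:: 2; 5; 6; 8]; [:: 2; 6; 7; 9]; [:: 3; 4; 6; 8]; [:: 3; 5; 6; 9]; [:: 3; 7; 8; 9]; [:: 4; 5; 6; 7]; [:: 4; 5; 8; 9]]].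

Definition L3n : seq (seq (seq nat)) :=
[:: [:: [:: 0; 1; 2; 9]; [:: 0; 1; 3; 7]; [:: 0; 1; 4; 6]; [:: 0; 1; 5; 8]; [:: 0; 2; 3; 6]; [:: 0; 2; 4; 5]; [:: 0; 2; 7; 8]; [:: 0; 3; 4; 8]; [:: 0; 3; 5; 9]; [:: 0; 4; 7; 9]; [:: 0; 5; 6; 7]; [:: 0; 6; 8; 9]; [:: 1; 2; 3; 5]; [:: 1; 2; 4; 8]; [:: 1; 2; 6; 7]; [:: 1; 3; 4; 9]; [:: 1; 3; 6; 8]; [:: 1; 4; 5; 7]; [:: 1; 5; 6; 9]; [:: 1; 7; 8; 9]; [:: 2; 3; 4; 7]; [:: 2; 3; 8; 9]; [:: 2; 4; 6; 9]; [:: 2; 5; 6; 8]; [:: 2; 5; 7; 9]; [:: 3; 4; 5; 6]; [:: 3; 5; 7; 8]; [:: 3; 6; 7; 9]; [:: 4; 5; 8; 9]; [:: 4; 6; 7; 8]];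
 [:: [:: 0; 1; 2; 5]; [:: 0; 1; 3; 4]; [:: 0; 1; 6; 7]; [:: 0; 1; 8; 9]; [:: 0; 2; 3; 7]; [:: 0; 2; 4; 8]; [:: 0; 2; 6; 9]; [:: 0; 3; 5; 9]; [:: 0; 3; 6; 8]; [:: 0; 4; 5; 6]; [:: 0; 4; 7; 9]; [:: 0; 5; 7; 8]; [:: 1; 2; 3; 9]; [:: 1; 2; 4; 7]; [:: 1; 2; 6; 8]; [:: 1; 3; 5; 6]; [:: 1; 3; 7; 8]; [:: 1; 4; 5; 8]; [:: 1; 4; 6; 9]; [:: 1; 5; 7; 9]; [:: 2; 3; 4; 6]; [:: 2; 3; 5; 8]; [:: 2; 4; 5; 9]; [:: 2; 5; 6; 7]; [:: 2; 7; 8; 9]; [:: 3; 4; 5; 7]; [:: 3; 4; 8; 9]; [:: 3; 6; 7; 9]; [:: 4; 6; 7; 8]; [:: 5; 6; 8; 9]];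
 [:: [:: 0; 1; 2; 7]; [:: 0; 1; 3; 9]; [:: 0; 1; 4; 8]; [:: 0; 1; 5; 6]; [:: 0; 2; 3; 8]; [:: 0; 2; 4; 6]; [:: 0; 2; 5; 9]; [:: 0; 3; 4; 5]; [:: 0; 3; 6; 7]; [:: 0; 4; 7; 9]; [:: 0; 5; 7; 8]; [:: 0; 6; 8; 9]; [:: 1; 2; 3; 6]; [:: 1; 2; 4; 5]; [:: 1; 2; 8; 9]; [:: 1; 3; 4; 7]; [:: 1; 3; 5; 8]; [:: 1; 4; 6; 9]; [:: 1; 5; 7; 9]; [:: 1; 6; 7; 8]; [:: 2; 3; 4; 9]; [:: 2; 3; 5; 7]; [:: 2; 4; 7; 8]; [:: 2; 5; 6; 8]; [:: 2; 6; 7; 9]; [:: 3; 4; 6; 8]; [:: 3; 5; 6; 9]; [:: 3; 7; 8; 9]; [:: 4; 5; 6; 7]; [:: 4; 5; 8; 9]];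
 [:: [:: 0; 1; 2; 6]; [:: 0; 1; 3; 5]; [:: 0; 1; 4; 7]; [:: 0; 1; 8; 9]; [:: 0; 2; 3; 4]; [:: 0; 2; 5; 9]; [:: 0; 2; 7; 8]; [:: 0; 3; 6; 8]; [:: 0; 3; 7; 9]; [:: 0; 4; 5; 8]; [:: 0; 4; 6; 9]; [:: 0; 5; 6; 7]; [:: 1; 2; 3; 7]; [:: 1; 2; 4; 9]; [:: 1; 2; 5; 8]; [:: 1; 3; 4; 8]; [:: 1; 3; 6; 9]; [:: 1; 4; 5; 6]; [:: 1; 5; 7; 9]; [:: 1; 6; 7; 8]; [:: 2; 3; 5; 6]; [:: 2; 3; 8; 9]; [:: 2; 4; 5; 7]; [:: 2; 4; 6; 8]; [:: 2; 6; 7; 9]; [:: 3; 4; 5; 9]; [:: 3; 4; 6; 7]; [:: 3; 5; 7; 8]; [:: 4; 7; 8; 9]; [:: 5; 6; 8; 9]];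
 [:: [:: 0; 1; 2; 3]; [:: 0; 1; 4; 8]; [:: 0; 1; 5; 9]; [:: 0; 1; 6; 7]; [:: 0; 2; 4; 9]; [:: 0; 2; 5; 6]; [:: 0; 2; 7; 8]; [:: 0; 3; 4; 6]; [:: 0; 3; 5; 8]; [:: 0; 3; 7; 9]; [:: 0; 4; 5; 7]; [:: 0; 6; 8; 9]; [:: 1; 2; 4; 6]; [:: 1; 2; 5; 7]; [:: 1; 2; 8; 9]; [:: 1; 3; 4; 5]; [:: 1; 3; 6; 9]; [:: 1; 3; 7; 8]; [:: 1; 4; 7; 9]; [:: 1; 5; 6; 8]; [:: 2; 3; 4; 7]; [:: 2; 3; 5; 9]; [:: 2; 3; 6; 8]; [:: 2; 4; 5; 8]; [:: 2; 6; 7; 9]; [:: 3; 4; 8; 9]; [:: 3; 5; 6; 7]; [:: 4; 5; 6; 9]; [:: 4; 6; 7; 8]; [:: 5; 7; 8; 9]];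
 [:: [:: 0; 1; 2; 7]; [:: 0; 1; 3; 6]; [:: 0; 1; 4; 5]; [:: 0; 1; 8; 9]; [:: 0; 2; 3; 5]; [:: 0; 2; 4; 9]; [:: 0; 2; 6; 8]; [:: 0; 3; 4; 8]; [:: 0; 3; 7; 9]; [:: 0; 4; 6; 7]; [:: 0; 5; 6; 9]; [:: 0; 5; 7; 8]; [:: 1; 2; 3; 4]; [:: 1; 2; 5; 8]; [:: 1; 2; 6; 9]; [:: 1; 3; 5; 9]; [:: 1; 3; 7; 8]; [:: 1; 4; 6; 8]; [:: 1; 4; 7; 9]; [:: 1; 5; 6; 7]; [:: 2; 3; 6; 7]; [:: 2; 3; 8; 9]; [:: 2; 4; 5; 6]; [:: 2; 4; 7; 8]; [:: 2; 5; 7; 9]; [:: 3; 4; 5; 7]; [:: 3; 4; 6; 9]; [:: 3; 5; 6; 8]; [:: 4; 5; 8; 9]; [:: 6; 7; 8; 9]];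
 [:: [:: 0; 1; 2; 4]; [:: 0; 1; 3; 8]; [:: 0; 1; 5; 7]; [:: 0; 1; 6; 9]; [:: 0; 2; 3; 9]; [:: 0; 2; 5; 8]; [:: 0; 2; 6; 7]; [:: 0; 3; 4; 7]; [:: 0; 3; 5; 6]; [:: 0; 4; 5; 9]; [:: 0; 4; 6; 8]; [:: 0; 7; 8; 9]; [:: 1; 2; 3; 7]; [:: 1; 2; 5; 6]; [:: 1; 2; 8; 9]; [:: 1; 3; 4; 6]; [:: 1; 3; 5; 9]; [:: 1; 4; 5; 8]; [:: 1; 4; 7; 9]; [:: 1; 6; 7; 8]; [:: 2; 3; 4; 5]; [:: 2; 3; 6; 8]; [:: 2; 4; 6; 9]; [:: 2; 4; 7; 8]; [:: 2; 5; 7; 9]; [:: 3; 4; 8; 9]; [:: 3; 5; 7; 8]; [:: 3; 6; 7; 9]; [:: 4; 5; 6; 7]; [:: 5; 6; 8; 9]];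
 [:: [:: 0; 1; 2; 9]; [:: 0; 1; 3; 8]; [:: 0; 1; 4; 7]; [:: 0; 1; 5; 6]; [:: 0; 2; 3; 7]; [:: 0; 2; 4; 6]; [:: 0; 2; 5; 8]; [:: 0; 3; 4; 5]; [:: 0; 3; 6; 9]; [:: 0; 4; 8; 9]; [:: 0; 5; 7; 9]; [:: 0; 6; 7; 8]; [:: 1; 2; 3; 6]; [:: 1; 2; 4; 5]; [:: 1; 2; 7; 8]; [:: 1; 3; 4; 9]; [:: 1; 3; 5; 7]; [:: 1; 4; 6; 8]; [:: 1; 5; 8; 9]; [:: 1; 6; 7; 9]; [:: 2; 3; 4; 8]; [:: 2; 3; 5; 9]; [:: 2; 4; 7; 9]; [:: 2; 5; 6; 7]; [:: 2; 6; 8; 9]; [:: 3; 4; 6; 7]; [:: 3; 5; 6; 8]; [:: 3; 7; 8; 9]; [:: 4; 5; 6; 9]; [:: 4; 5; 7; 8]];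
 [:: [:: 0; 1; 2; 6]; [:: 0; 1; 3; 5]; [:: 0; 1; 4; 9]; [:: 0; 1; 7; 8]; [:: 0; 2; 3; 4]; [:: 0; 2; 5; 8]; [:: 0; 2; 7; 9]; [:: 0; 3; 6; 7]; [:: 0; 3; 8; 9]; [:: 0; 4; 5; 7]; [:: 0; 4; 6; 8]; [:: 0; 5; 6; 9]; [:: 1; 2; 3; 9]; [:: 1; 2; 4; 8]; [:: 1; 2; 5; 7]; [:: 1; 3; 4; 7]; [:: 1; 3; 6; 8]; [:: 1; 4; 5; 6]; [:: 1; 5; 8; 9]; [:: 1; 6; 7; 9]; [:: 2; 3; 5; 6]; [:: 2; 3; 7; 8]; [:: 2; 4; 5; 9]; [:: 2; 4; 6; 7]; [:: 2; 6; 8; 9]; [:: 3; 4; 5; 8]; [:: 3; 4; 6; 9]; [:: 3; 5; 7; 9]; [:: 4; 7; 8; 9]; [:: 5; 6; 7; 8]];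
 [:: [:: 0; 1; 2; 3]; [:: 0; 1; 4; 7]; [:: 0; 1; 5; 8]; [:: 0; 1; 6; 9]; [:: 0; 2; 4; 8]; [:: 0; 2; 5; 6]; [:: 0; 2; 7; 9]; [:: 0; 3; 4; 6]; [:: 0; 3; 5; 7]; [:: 0; 3; 8; 9]; [:: 0; 4; 5; 9]; [:: 0; 6; 7; 8]; [:: 1; 2; 4; 6]; [:: 1; 2; 5; 9]; [:: 1; 2; 7; 8]; [:: 1; 3; 4; 5]; [:: 1; 3; 6; 8]; [:: 1; 3; 7; 9]; [:: 1; 4; 8; 9]; [:: 1; 5; 6; 7]; [:: 2; 3; 4; 9]; [:: 2; 3; 5; 8]; [:: 2; 3; 6; 7]; [:: 2; 4; 5; 7]; [:: 2; 6; 8; 9]; [:: 3; 4; 7; 8]; [:: 3; 5; 6; 9]; [:: 4; 5; 6; 8]; [:: 4; 6; 7; 9]; [:: 5; 7; 8; 9]];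
 [:: [:: 0; 1; 2; 9]; [:: 0; 1; 3; 6]; [:: 0; 1; 4; 5]; [:: 0; 1; 7; 8]; [:: 0; 2; 3; 5]; [:: 0; 2; 4; 8]; [:: 0; 2; 6; 7]; [:: 0; 3; 4; 7]; [:: 0; 3; 8; 9]; [:: 0; 4; 6; 9]; [:: 0; 5; 6; 8]; [:: 0; 5; 7; 9]; [:: 1; 2; 3; 4]; [:: 1; 2; 5; 7]; [:: 1; 2; 6; 8]; [:: 1; 3; 5; 8]; [:: 1; 3; 7; 9]; [:: 1; 4; 6; 7]; [:: 1; 4; 8; 9]; [:: 1; 5; 6; 9]; [:: 2; 3; 6; 9]; [:: 2; 3; 7; 8]; [:: 2; 4; 5; 6]; [:: 2; 4; 7; 9]; [:: 2; 5; 8; 9]; [:: 3; 4; 5; 9]; [:: 3; 4; 6; 8]; [:: 3; 5; 6; 7]; [:: 4; 5; 7; 8]; [:: 6; 7; 8; 9]];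
 [:: [:: 0; 1; 2; 4]; [:: 0; 1; 3; 7]; [:: 0; 1; 5; 9]; [:: 0; 1; 6; 8]; [:: 0; 2; 3; 8]; [:: 0; 2; 5; 7]; [:: 0; 2; 6; 9]; [:: 0; 3; 4; 9]; [:: 0; 3; 5; 6]; [:: 0; 4; 5; 8]; [:: 0; 4; 6; 7]; [:: 0; 7; 8; 9]; [:: 1; 2; 3; 9]; [:: 1; 2; 5; 6]; [:: 1; 2; 7; 8]; [:: 1; 3; 4; 6]; [:: 1; 3; 5; 8]; [:: 1; 4; 5; 7]; [:: 1; 4; 8; 9]; [:: 1; 6; 7; 9]; [:: 2; 3; 4; 5]; [:: 2; 3; 6; 7]; [:: 2; 4; 6; 8]; [:: 2; 4; 7; 9]; [:: 2; 5; 8; 9]; [:: 3; 4; 7; 8]; [:: 3; 5; 7; 9]; [:: 3; 6; 8; 9]; [:: 4; 5; 6; 9]; [:: 5; 6; 7; 8]];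
 [:: [:: 0; 1; 2; 8]; [:: 0; 1; 3; 9]; [:: 0; 1; 4; 6]; [:: 0; 1; 5; 7]; [:: 0; 2; 3; 6]; [:: 0; 2; 4; 5]; [:: 0; 2; 7; 9]; [:: 0; 3; 4; 7]; [:: 0; 3; 5; 8]; [:: 0; 4; 8; 9]; [:: 0; 5; 6; 9]; [:: 0; 6; 7; 8]; [:: 1; 2; 3; 5]; [:: 1; 2; 4; 7]; [:: 1; 2; 6; 9]; [:: 1; 3; 4; 8]; [:: 1; 3; 6; 7]; [:: 1; 4; 5; 9]; [:: 1; 5; 6; 8]; [:: 1; 7; 8; 9]; [:: 2; 3; 4; 9]; [:: 2; 3; 7; 8]; [:: 2; 4; 6; 8]; [:: 2; 5; 6; 7]; [:: 2; 5; 8; 9]; [:: 3; 4; 5; 6]; [:: 3; 5; 7; 9]; [:: 3; 6; 8; 9]; [:: 4; 5; 7; 8]; [:: 4; 6; 7; 9]];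
 [:: [:: 0; 1; 2; 5]; [:: 0; 1; 3; 4]; [:: 0; 1; 6; 9]; [:: 0; 1; 7; 8]; [:: 0; 2; 3; 9]; [:: 0; 2; 4; 7]; [:: 0; 2; 6; 8]; [:: 0; 3; 5; 8]; [:: 0; 3; 6; 7]; [:: 0; 4; 5; 6]; [:: 0; 4; 8; 9]; [:: 0; 5; 7; 9]; [:: 1; 2; 3; 8]; [:: 1; 2; 4; 9]; [:: 1; 2; 6; 7]; [:: 1; 3; 5; 6]; [:: 1; 3; 7; 9]; [:: 1; 4; 5; 7]; [:: 1; 4; 6; 8]; [:: 1; 5; 8; 9]; [:: 2; 3; 4; 6]; [:: 2; 3; 5; 7]; [:: 2; 4; 5; 8]; [:: 2; 5; 6; 9]; [:: 2; 7; 8; 9]; [:: 3; 4; 5; 9]; [:: 3; 4; 7; 8]; [:: 3; 6; 8; 9]; [:: 4; 6; 7; 9]; [:: 5; 6; 7; 8]];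
 [:: [:: 0; 1; 2; 7]; [:: 0; 1; 3; 8]; [:: 0; 1; 4; 6]; [:: 0; 1; 5; 9]; [:: 0; 2; 3; 6]; [:: 0; 2; 4; 5]; [:: 0; 2; 8; 9]; [:: 0; 3; 4; 9]; [:: 0; 3; 5; 7]; [:: 0; 4; 7; 8]; [:: 0; 5; 6; 8]; [:: 0; 6; 7; 9]; [:: 1; 2; 3; 5]; [:: 1; 2; 4; 9]; [:: 1; 2; 6; 8]; [:: 1; 3; 4; 7]; [:: 1; 3; 6; 9]; [:: 1; 4; 5; 8]; [:: 1; 5; 6; 7]; [:: 1; 7; 8; 9]; [:: 2; 3; 4; 8]; [:: 2; 3; 7; 9]; [:: 2; 4; 6; 7]; [:: 2; 5; 6; 9]; [:: 2; 5; 7; 8]; [:: 3; 4; 5; 6]; [:: 3; 5; 8; 9]; [:: 3; 6; 7; 8]; [:: 4; 5; 7; 9]; [:: 4; 6; 8; 9]];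
 [:: [:: 0; 1; 2; 5]; [:: 0; 1; 3; 4]; [:: 0; 1; 6; 8]; [:: 0; 1; 7; 9]; [:: 0; 2; 3; 8]; [:: 0; 2; 4; 9]; [:: 0; 2; 6; 7]; [:: 0; 3; 5; 7]; [:: 0; 3; 6; 9]; [:: 0; 4; 5; 6]; [:: 0; 4; 7; 8]; [:: 0; 5; 8; 9]; [:: 1; 2; 3; 7]; [:: 1; 2; 4; 8]; [:: 1; 2; 6; 9]; [:: 1; 3; 5; 6]; [:: 1; 3; 8; 9]; [:: 1; 4; 5; 9]; [:: 1; 4; 6; 7]; [:: 1; 5; 7; 8]; [:: 2; 3; 4; 6]; [:: 2; 3; 5; 9]; [:: 2; 4; 5; 7]; [:: 2; 5; 6; 8]; [:: 2; 7; 8; 9]; [:: 3; 4; 5; 8]; [:: 3; 4; 7; 9]; [:: 3; 6; 7; 8]; [:: 4; 6; 8; 9]; [:: 5; 6; 7; 9]];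
 [:: [:: 0; 1; 2; 8]; [:: 0; 1; 3; 7]; [:: 0; 1; 4; 9]; [:: 0; 1; 5; 6]; [:: 0; 2; 3; 9]; [:: 0; 2; 4; 6]; [:: 0; 2; 5; 7]; [:: 0; 3; 4; 5]; [:: 0; 3; 6; 8]; [:: 0; 4; 7; 8]; [:: 0; 5; 8; 9]; [:: 0; 6; 7; 9]; [:: 1; 2; 3; 6]; [:: 1; 2; 4; 5]; [:: 1; 2; 7; 9]; [:: 1; 3; 4; 8]; [:: 1; 3; 5; 9]; [:: 1; 4; 6; 7]; [:: 1; 5; 7; 8]; [:: 1; 6; 8; 9]; [:: 2; 3; 4; 7]; [:: 2; 3; 5; 8]; [:: 2; 4; 8; 9]; [:: 2; 5; 6; 9]; [:: 2; 6; 7; 8]; [:: 3; 4; 6; 9]; [:: 3; 5; 6; 7]; [:: 3; 7; 8; 9]; [:: 4; 5; 6; 8]; [:: 4; 5; 7; 9]];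
 [:: [:: 0; 1; 2; 6]; [:: 0; 1; 3; 5]; [:: 0; 1; 4; 8]; [:: 0; 1; 7; 9]; [:: 0; 2; 3; 4]; [:: 0; 2; 5; 7]; [:: 0; 2; 8; 9]; [:: 0; 3; 6; 9]; [:: 0; 3; 7; 8]; [:: 0; 4; 5; 9]; [:: 0; 4; 6; 7]; [:: 0; 5; 6; 8]; [:: 1; 2; 3; 8]; [:: 1; 2; 4; 7]; [:: 1; 2; 5; 9]; [:: 1; 3; 4; 9]; [:: 1; 3; 6; 7]; [:: 1; 4; 5; 6]; [:: 1; 5; 7; 8]; [:: 1; 6; 8; 9]; [:: 2; 3; 5; 6]; [:: 2; 3; 7; 9]; [:: 2; 4; 5; 8]; [:: 2; 4; 6; 9]; [:: 2; 6; 7; 8]; [:: 3; 4; 5; 7]; [:: 3; 4; 6; 8]; [:: 3; 5; 8; 9]; [:: 4; 7; 8; 9]; [:: 5; 6; 7; 9]];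
 [:: [:: 0; 1; 2; 3]; [:: 0; 1; 4; 9]; [:: 0; 1; 5; 7]; [:: 0; 1; 6; 8]; [:: 0; 2; 4; 7]; [:: 0; 2; 5; 6]; [:: 0; 2; 8; 9]; [:: 0; 3; 4; 6]; [:: 0; 3; 5; 9]; [:: 0; 3; 7; 8]; [:: 0; 4; 5; 8]; [:: 0; 6; 7; 9]; [:: 1; 2; 4; 6]; [:: 1; 2; 5; 8]; [:: 1; 2; 7; 9]; [:: 1; 3; 4; 5]; [:: 1; 3; 6; 7]; [:: 1; 3; 8; 9]; [:: 1; 4; 7; 8]; [:: 1; 5; 6; 9]; [:: 2; 3; 4; 8]; [:: 2; 3; 5; 7]; [:: 2; 3; 6; 9]; [:: 2; 4; 5; 9]; [:: 2; 6; 7; 8]; [:: 3; 4; 7; 9]; [:: 3; 5; 6; 8]; [:: 4; 5; 6; 7]; [:: 4; 6; 8; 9]; [:: 5; 7; 8; 9]];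
 [:: [:: 0; 1; 2; 8]; [:: 0; 1; 3; 6]; [:: 0; 1; 4; 5]; [:: 0; 1; 7; 9]; [:: 0; 2; 3; 5]; [:: 0; 2; 4; 7]; [:: 0; 2; 6; 9]; [:: 0; 3; 4; 9]; [:: 0; 3; 7; 8]; [:: 0; 4; 6; 8]; [:: 0; 5; 6; 7]; [:: 0; 5; 8; 9]; [:: 1; 2; 3; 4]; [:: 1; 2; 5; 9]; [:: 1; 2; 6; 7]; [:: 1; 3; 5; 7]; [:: 1; 3; 8; 9]; [:: 1; 4; 6; 9]; [:: 1; 4; 7; 8]; [:: 1; 5; 6; 8]; [:: 2; 3; 6; 8]; [:: 2; 3; 7; 9]; [:: 2; 4; 5; 6]; [:: 2; 4; 8; 9]; [:: 2; 5; 7; 8]; [:: 3; 4; 5; 8]; [:: 3; 4; 6; 7]; [:: 3; 5; 6; 9]; [:: 4; 5; 7; 9]; [:: 6; 7; 8; 9]];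
 [:: [:: 0; 1; 2; 4]; [:: 0; 1; 3; 9]; [:: 0; 1; 5; 8]; [:: 0; 1; 6; 7]; [:: 0; 2; 3; 7]; [:: 0; 2; 5; 9]; [:: 0; 2; 6; 8]; [:: 0; 3; 4; 8]; [:: 0; 3; 5; 6]; [:: 0; 4; 5; 7]; [:: 0; 4; 6; 9]; [:: 0; 7; 8; 9]; [:: 1; 2; 3; 8]; [:: 1; 2; 5; 6]; [:: 1; 2; 7; 9]; [:: 1; 3; 4; 6]; [:: 1; 3; 5; 7]; [:: 1; 4; 5; 9]; [:: 1; 4; 7; 8]; [:: 1; 6; 8; 9]; [:: 2; 3; 4; 5]; [:: 2; 3; 6; 9]; [:: 2; 4; 6; 7]; [:: 2; 4; 8; 9]; [:: 2; 5; 7; 8]; [:: 3; 4; 7; 9]; [:: 3; 5; 8; 9]; [:: 3; 6; 7; 8]; [:: 4; 5; 6; 8]; [:: 5; 6; 7; 9]]].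

Definition mkb (l : seq nat) : {set 'I_10} := [set i : 'I_10 | nat_of_ord i \in l].
Definition canon (l : seq nat) : seq nat := [seq i <- iota 0 10 | i \in l].
Definition sysOf (l : seq (seq nat)) : {set {set 'I_10}} := [set B in map mkb l].

Definition trip_ok (s : seq (seq nat)) : bool :=
  all (fun a => all (fun b => all (fun c => if (a < b) && (b < c) then
    (count (fun bl => all (fun x => x \in bl) [:: a; b; c]) s == 1) else true)
    (iota 0 10)) (iota 0 10)) (iota 0 10).
Definition chk_sys (s : seq (seq nat)) : bool :=
  uniq (map canon s) && all (fun bl => size (canon bl) == 4) s && trip_ok s.
Definition quad_ok (Ls : seq (seq (seq nat))) (mu : nat) : bool :=
  all (fun a => all (fun b => all (fun c => all (fun d => if [&& a < b, b < c & c < d] then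
    (count (fun s => has (fun bl => canon bl == canon [:: a; b; c; d]) s) Ls == mu) else true)
    (iota 0 10)) (iota 0 10)) (iota 0 10)) (iota 0 10).
Definition chk_L (Ls : seq (seq (seq nat))) (mu : nat) : bool :=
  all chk_sys Ls && quad_ok Ls mu.

Lemma t2 : chk_L L2n 2. Proof. vm_compute. reflexivity. Qed.
Lemma t3 : chk_L L3n 3. Proof. vm_compute. reflexivity. Qed.

Lemma mem_canon l i : (i \in canon l) = (i < 10) && (i \in l).
Proof. by rewrite /canon mem_filter mem_iota add0n andbC. Qed.

Lemma card_mkb l : #|mkb l| = size (canon l).
Proof.
rewrite cardsE cardE /enum_mem -enumT size_filter /canon size_filter.
rewrite -val_enum_ord count_map; apply: eq_count => i /=.
by [].
Qed.

Lemma mkb_eq k l : (mkb k == mkb l) = (canon k == canon l).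
Proof.
apply/eqP/eqP => e.
  rewrite /canon; apply: eq_in_filter => x; rewrite mem_iota add0n => /= Hx.
  have := congr1 (fun B : {set 'I_10} => Ordinal Hx \in B) e; rewrite !inE /=.
  by [].
apply/setP => i; rewrite !inE.
have := congr1 (fun s => nat_of_ord i \in s) e.
by rewrite !mem_canon ltn_ord.
Qed.

Lemma set_mkb (B : {set 'I_10}) :
  let t := map (@nat_of_ord 10) (enum B) in
  [/\ B = mkb t, sorted ltn t, size t = #|B| & all (fun x => x < 10) t].
Proof.
move=> t; split.
- apply/setP => i; rewrite inE /t mem_map ?mem_enum //; exact: val_inj.
- rewrite /t sorted_map /enum_mem -enumT; apply: sorted_filter.
    by move=> x y z /= ; apply: ltn_trans.
  by rewrite -sorted_map val_enum_ord iota_ltn_sorted.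
- by rewrite /t size_map cardE.
- by apply/allP => x /mapP [i _ ->]; apply: ltn_ord.
Qed.

Lemma card_filter_set (S : seq {set 'I_10}) (P : pred {set 'I_10}) :
  uniq S -> #|[set b in [set x in S] | P b]| = count P S.
Proof.
move=> uS; rewrite -size_filter -(card_uniqP (filter_uniq P uS)).
by apply: eq_card => x; rewrite !inE mem_filter andbC.
Qed.

Lemma uniq_transfer (A B : eqType) (f g : A -> B) s :
  (forall x y, g x = g y -> f x = f y) -> uniq (map f s) -> uniq (map g s).
Proof.
move=> H; elim: s => //= x s IH /andP [nx us]; rewrite IH // andbT.
apply/negP => /mapP [y ys e]; case/negP: nx; apply/mapP; exists y => //.
exact: H.
Qed.

Lemma uniq_mkb s : uniq (map canon s) -> uniq (map mkb s).
Proof.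
elim: s => //= x s IH /andP [nx us]; rewrite IH // andbT.
apply/negP => /mapP [y ys e]; case/negP: nx; apply/mapP; exists y => //.
by apply/eqP; rewrite -mkb_eq e.
Qed.

Lemma subset_mkb t l : all (fun x => x < 10) t ->
  (mkb t \subset mkb l) = all (fun x => x \in l) t.
Proof.
move=> /allP Ht; apply/subsetP/allP => H x.
  move=> xt; have Hx := Ht x xt.
  have := H (Ordinal Hx); rewrite !inE /=; exact.
by rewrite !inE => /H.
Qed.

Lemma chk_sys_ok s : chk_sys s -> steiner_system 3 4 10 (sysOf s).
Proof.
case/andP => /andP [us sz] tr; split.
  move=> b; rewrite inE => /mapP [bl bls ->].
  by rewrite card_mkb; apply/eqP; move/allP: sz; apply.
move=> T cT; have [eT st szt alt] := set_mkb T.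
move: st szt alt eT; set t := map _ _ => st szt alt eT.
rewrite card_filter_set; last first.
  exact: uniq_mkb.
rewrite count_map.
rewrite (eq_count (a2 := fun bl => all (fun x => x \in bl) t)); last first.
  by move=> bl /=; rewrite eT subset_mkb.
clear eT; clearbody t; move: st alt; rewrite cT in szt.
case: t szt => [|a [|b [|c [|? ?]]]] //= _ /and3P [ab bc _] /and4P [a10 b10 c10 _].
move/allP: tr => /(_ a); rewrite mem_iota a10 => /(_ isT) /allP /(_ b).
rewrite mem_iota b10 => /(_ isT) /allP /(_ c); rewrite mem_iota c10 => /(_ isT).
by rewrite ab bc /= => /eqP.
Qed.

Lemma chk_L_ok Ls mu : chk_L Ls mu -> large_set_mult 3 4 10 mu (map sysOf Ls).
Proof.
case/andP => /allP ok qok; split.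
  by move=> B /mapP [s sL ->]; apply: chk_sys_ok; apply: ok.
move=> K cK; have [eK st szt alt] := set_mkb K.
move: st szt alt eK; set k := map _ _ => st szt alt eK.
rewrite count_map.
rewrite (eq_count (a2 := fun s => has (fun bl => canon bl == canon k) s)); last first.
  move=> s /=; rewrite inE eK -has_pred1 has_map; apply: eq_has => bl /=.
  by rewrite eq_sym mkb_eq.
clear eK; clearbody k; move: st alt; rewrite cK in szt.
case: k szt => [|a [|b [|c [|d [|? ?]]]]] //= _ /and4P [ab bc cd _] /and5P [a10 b10 c10 d10 _].
move/allP: qok => /(_ a); rewrite mem_iota a10 => /(_ isT) /allP /(_ b).
rewrite mem_iota b10 => /(_ isT) /allP /(_ c); rewrite mem_iota c10 => /(_ isT).
move/allP => /(_ d); rewrite mem_iota d10 => /(_ isT).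
by rewrite ab bc cd /= => /eqP.
Qed.

Lemma ls_cat L1 L2 m1 m2 : large_set_mult 3 4 10 m1 L1 -> large_set_mult 3 4 10 m2 L2 ->
  large_set_mult 3 4 10 (m1 + m2) (L1 ++ L2).
Proof.
move=> [h1 c1] [h2 c2]; split.
  by move=> B; rewrite mem_cat => /orP [/h1|/h2].
by move=> K cK; rewrite count_cat c1 // c2.
Qed.

Theorem theorem16 (mu : nat) : 2 <= mu ->
  exists L : seq {set {set 'I_10}}, large_set_mult 3 4 10 mu L.
Proof.
elim: mu {-2}mu (leqnn mu) => [|n IH] mu hmu h2.
  by move: hmu h2; rewrite leqn0 => /eqP ->.
case: mu hmu h2 => [|[|[|[|m]]]] // hmu _.
- by exists (map sysOf L2n); apply: chk_L_ok; exact: t2.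
- by exists (map sysOf L3n); apply: chk_L_ok; exact: t3.
- have [L HL] := IH m.+2 (ltnW hmu) isT.
  exists (L ++ map sysOf L2n); have -> : m.+4 = m.+2 + 2 by rewrite addn2. apply: ls_cat => //.
  by apply: chk_L_ok; exact: t2.
Qed.
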